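(* Consider a 3-S 3-D MUN-D over $\mathbb{F}_{2^m}$ (as in the context) with nonzero min-cut between every $S_i$ and $T_j$, let $k\mid 2^m-1$ and $\alpha\in\mathbb{F}_{2^m}$ of multiplicative order $k$. For each $i\in\{1,2,3\}$ and each $q\in\{1,\dots,k-1\}$, $b_i(q)$ is a constant if and only if $b_i(0)$ is a constant.
   Context: A 3-S 3-D MUN-D: finite directed acyclic graph with unit-delay links, sources $S_1,S_2,S_3$ (one process each), destinations $T_1,T_2,T_3$ ($T_i$ demands $S_i$'s process), min-cut between $S_i$ and $T_i$ equal to $1$, linear network coding with local encoding coefficient vector $\underline{\varepsilon}$ (indeterminates); $M_{ij}(\underline{\varepsilon},D)$ is the scalar transfer polynomial from $S_i$ to $T_j$ (common delay removed) and $M_{ij}(\underline{\varepsilon},x)$ its value at $D=x$. Writing $M_{ij}$ for $M_{ij}(\underline{\varepsilon},\alpha^q)$: $b_1(q)=\frac{M_{21}M_{13}}{M_{11}M_{23}}$, $b_2(q)=\frac{M_{22}M_{13}}{M_{12}M_{23}}$, $b_3(q)=\frac{M_{33}M_{12}}{M_{13}M_{32}}$. ''Constant'' means independent of $\underline{\varepsilon}$. *)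

(* Defs.v *)
From HB Require Import structures.
From mathcomp Require Import all_boot all_order all_algebra all_field.
From mathcomp Require Import fraction.
From mathcomp.multinomials Require Import mpoly.
Set Implicit Arguments. Unset Strict Implicit. Unset Printing Implicit Defensive.
Import Order.TTheory GRing.Theory.
Local Open Scope ring_scope.

Section Network.
Variables (F : fieldType) (V E : finType) (tl hd : E -> V).

Definition follows : rel E := fun e e' => hd e == tl e'.

Definition acyclic : Prop :=
  forall (e : E) (p : seq E), path follows e p -> last e p = e -> p = [::].

Definition is_path (e e' : E) (t : seq E) : bool :=
  path follows e t && (last e t == e').

(* Number of local encoding coefficients: one indeterminate per ordered pair
   of edges (only adjacent pairs are actually used). *)
Definition nvar := #|{: E * E}|.
Definition eps (ab : E * E) : {mpoly F[nvar]} := 'X_(enum_rank ab).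

Definition path_gain (e : E) (t : seq E) : {mpoly F[nvar]} :=
  \prod_(ab <- zip (e :: t) t) eps ab.

(* Delay (number of unit-delay links) of the path e :: t. *)
Definition path_delay (e : E) (t : seq E) : nat := (size t).+1.

(* In an acyclic network every path has at most #|E| edges, so paths from e
   to e' are exactly the tuples below. *)
Definition min_delay (e e' : E) : nat :=
  \big[minn/#|E|.+1]_(n < #|E|) \big[minn/#|E|.+1]_(t : n.-tuple E | is_path e e' t)
     path_delay e t.

(* Transfer polynomial M(eps, D) from edge e to edge e' with common delay
   removed, evaluated at D = x. *)
Definition transfer (e e' : E) (x : F) : {mpoly F[nvar]} :=
  \sum_(n < #|E|) \sum_(t : n.-tuple E | is_path e e' t)
     (x ^+ (path_delay e t - min_delay e e')) *: path_gain e t.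

End Network.

Definition constant_frac (F : idomainType) (n : nat)
    (b : {fraction {mpoly F[n]}}) : Prop :=
  exists c : F, b = FracField.tofrac (c%:MP).

Definition i1 : 'I_3 := @Ordinal 3 0 isT.
Definition i2 : 'I_3 := @Ordinal 3 1 isT.
Definition i3 : 'I_3 := @Ordinal 3 2 isT.

Section Ratios.
Variables (F : fieldType) (V E : finType) (tl hd : E -> V)
  (sigma tau : 'I_3 -> E) (alpha : F).

(* M_ij(eps, alpha^q) as an element of the rational function field F(eps);
   sigma i = the outgoing edge of S_i, tau j = the incoming edge of T_j. *)
Definition Mq (q : nat) (i j : 'I_3) : {fraction {mpoly F[nvar E]}} :=
  FracField.tofrac (transfer tl hd (sigma i) (tau j) (alpha ^+ q)).

Definition bq (i : 'I_3) (q : nat) : {fraction {mpoly F[nvar E]}} :=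
  let M := Mq q in
  if i == i1 then (M i2 i1 * M i1 i3) / (M i1 i1 * M i2 i3)
  else if i == i2 then (M i2 i2 * M i1 i3) / (M i1 i2 * M i2 i3)
  else (M i3 i3 * M i1 i2) / (M i1 i3 * M i3 i2).
End Ratios.

(* Main.v *)
Require Import Defs.
From HB Require Import structures.
From mathcomp Require Import all_boot all_order all_algebra all_field.
From mathcomp Require Import fraction.
From mathcomp.multinomials Require Import mpoly.
Import GRing.Theory.
Local Open Scope ring_scope.

Lemma bigmin_le (I : eqType) (r : seq I) (P : pred I) (f : I -> nat) N i :
  i \in r -> P i -> (\big[minn/N]_(j <- r | P j) f j <= f i)%N.
Proof.
elim: r => // a r IH; rewrite inE big_cons => /orP [/eqP <- Pi|ir Pi].
  by rewrite Pi geq_minl.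
case: (P a); last exact: IH.
by apply: leq_trans (geq_minr _ _) (IH ir Pi).
Qed.

Section Scale.
Variables (F : fieldType) (n : nat).

Definition lq (x : F) : n.-tuple {mpoly F[n]} := [tuple x *: 'X_i | i < n].
Arguments lq : clear implicits.

Lemma lqE x (i : 'I_n) : tnth (lq x) i = x *: 'X_i.
Proof. by rewrite tnth_map tnth_ord_tuple. Qed.

Lemma phiX x (i : 'I_n) : 'X_i \mPo lq x = x *: 'X_i.
Proof. by rewrite comp_mpolyXU -tnth_nth lqE. Qed.

Lemma psi_phi x p : x != 0 -> (p \mPo lq x) \mPo lq x^-1 = p.
Proof.
move=> x0.
rewrite [p \mPo _]comp_mpolyEX raddf_sum /= -[RHS](comp_mpoly_id p) [RHS]comp_mpolyEX.
apply: eq_bigr => m _; rewrite comp_mpolyZ; congr (_ *: _).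
rewrite !comp_mpolyX rmorph_prod /=; apply: eq_bigr => i _.
rewrite rmorphXn /= lqE comp_mpolyZ phiX scalerA mulfV // scale1r.
by rewrite tnth_map tnth_ord_tuple.
Qed.

Lemma prod_scale (I : Type) (s : seq I) (f : I -> {mpoly F[n]}) x :
  \prod_(a <- s) (x *: f a) = x ^+ size s *: \prod_(a <- s) f a.
Proof.
elim: s => [|a s IH]; first by rewrite !big_nil scale1r.
by rewrite !big_cons IH -scalerAl -scalerAr scalerA exprS.
Qed.
End Scale.

Section Tr.
Variables (F : fieldType) (V E : finType) (tl hd : E -> V).

Lemma gain_phi x e t :
  path_gain F e t \mPo lq F (nvar E) x = x ^+ size t *: path_gain F e t.
Proof.
rewrite /path_gain rmorph_prod /=.
under eq_bigr do rewrite /eps phiX.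
by rewrite prod_scale size_zip /= (minn_idPr (leqnSn _)).
Qed.

Lemma md_le e e' n (t : n.-tuple E) : (n < #|E|)%N -> is_path tl hd e e' t ->
  (min_delay tl hd e e' <= path_delay e t)%N.
Proof.
move=> ltn pt; rewrite /min_delay.
apply: leq_trans (bigmin_le _ _ _ _ _ (Ordinal ltn) (mem_index_enum _) isT) _.
exact: (@bigmin_le _ _ (fun t0 : n.-tuple E => is_path tl hd e e' t0) (fun t0 : n.-tuple E => path_delay e t0) _ t (mem_index_enum _) pt).
Qed.

Lemma transfer_scale (x : F) e e' : x != 0 ->
  transfer tl hd e e' x =
  (x / x ^+ min_delay tl hd e e') *: (transfer tl hd e e' 1 \mPo lq F (nvar E) x).
Proof.
move=> x0; rewrite /transfer [X in _ *: X]raddf_sum scaler_sumr; apply: eq_bigr => [[n ltn]] _.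
rewrite [X in _ *: X]raddf_sum scaler_sumr; apply: eq_bigr => t pt /=.
rewrite expr1n scale1r gain_phi scalerA size_tuple; congr (_ *: _).
rewrite expfB_cond; last by rewrite (negbTE x0) add0n; exact: md_le pt.
by rewrite /path_delay size_tuple exprS mulrAC.
Qed.
End Tr.

Section Fr.
Variables (F : fieldType) (n : nat).
Local Notation phi x p := (p \mPo lq F n x).

Lemma const_ratio (P Q : {mpoly F[n]}) :
  constant_frac (FracField.tofrac P / FracField.tofrac Q) <->
  (Q = 0 \/ exists c, P = c *: Q).
Proof.
split.
  move=> [c hc]; case: (eqVneq Q 0) => [->|Q0]; [by left|right].
  exists c; apply/eqP; rewrite -tofrac_eq.
  move: hc => /(congr1 (fun z => z * FracField.tofrac Q)).
  rewrite mulfVK ?tofrac_eq0 // => ->.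
  by rewrite -tofracM mul_mpolyC.
case: (eqVneq Q 0) => [-> _|Q0].
  by exists 0; rewrite tofrac0 invr0 mulr0.
case=> [/eqP|[c ->]]; first by rewrite (negbTE Q0).
by exists c; rewrite -mul_mpolyC tofracM mulfK // tofrac_eq0.
Qed.

Lemma cond_transfer (x u v : F) (P Q : {mpoly F[n]}) : x != 0 -> u != 0 -> v != 0 ->
  ((v *: phi x Q = 0 \/ exists c, u *: phi x P = c *: (v *: phi x Q)) <->
   (Q = 0 \/ exists c, P = c *: Q)).
Proof.
move=> x0 u0 v0; split.
  case=> [h|[c h]].
    left; have : phi x Q = 0.
      by move: h => /(congr1 (fun z => v^-1 *: z)); rewrite scalerA mulVf // scale1r scaler0.
    by move/(congr1 (comp_mpoly (lq F n x^-1))); rewrite psi_phi // comp_mpoly0.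
  right; exists (u^-1 * c * v).
  move: h => /(congr1 (fun z => (u^-1 *: z) \mPo lq F n x^-1)).
  rewrite /= !comp_mpolyZ !psi_phi // !scalerA mulVf // scale1r => ->.
  by [].
case=> [->|[c ->]]; first by left; rewrite comp_mpoly0 scaler0.
right; exists (u * c / v); rewrite comp_mpolyZ !scalerA mulfVK //.
Qed.

Lemma key (x : F) (A B C D : {mpoly F[n]}) (sa sb sc sd : F) :
  x != 0 -> sa != 0 -> sb != 0 -> sc != 0 -> sd != 0 ->
  constant_frac (FracField.tofrac (sa *: phi x A) * FracField.tofrac (sb *: phi x B) /
    (FracField.tofrac (sc *: phi x C) * FracField.tofrac (sd *: phi x D))) <->
  constant_frac (FracField.tofrac A * FracField.tofrac B /
    (FracField.tofrac C * FracField.tofrac D)).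
Proof.
move=> x0 a0 b0 c0 d0; rewrite -!tofracM !const_ratio.
rewrite -!scalerAl -!scalerAr !scalerA -!rmorphM /=.
by apply: cond_transfer => //; apply: mulf_neq0.
Qed.
End Fr.

Theorem proposition1
  (m : nat) (F : finFieldType) (HF2 : 2 \in [pchar F]) (HFcard : #|F| = (2 ^ m)%N)
  (V E : finType) (tl hd : E -> V)
  (S T : 'I_3 -> V) (sigma tau : 'I_3 -> E)
  (Hacyc : acyclic tl hd)
  (HSinj : injective S) (HTinj : injective T)
  (Hsigma : forall i, tl (sigma i) = S i)
  (Hsigma_uniq : forall i e, tl e = S i -> e = sigma i)
  (Htau : forall j, hd (tau j) = T j)
  (Htau_uniq : forall j e, hd e = T j -> e = tau j)
  (Hcut : forall i j, exists t : seq E, is_path tl hd (sigma i) (tau j) t)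
  (k : nat) (Hk : (k %| 2 ^ m - 1)%N) (alpha : F) (Halpha : k.-primitive_root alpha) :
  forall (i : 'I_3) (q : nat), (1 <= q <= k - 1)%N ->
    (constant_frac (bq tl hd sigma tau alpha i q)
     <-> constant_frac (bq tl hd sigma tau alpha i 0)).
Proof.
move=> i q _.
have a0 : alpha != 0.
  apply/negP => /eqP a0; move: (prim_expr_order Halpha); rewrite a0 expr0n.
  by rewrite (gtn_eqF (prim_order_gt0 Halpha)) => /eqP; rewrite eq_sym oner_eq0.
set x := alpha ^+ q.
have x0 : x != 0 by rewrite expf_neq0.
pose s a b : F := x / x ^+ min_delay tl hd (sigma a) (tau b).
have s0 a b : s a b != 0 by rewrite mulf_neq0 ?invr_neq0 ?expf_neq0.
have HM a b : Mq tl hd sigma tau alpha q a b =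
  FracField.tofrac (s a b *: (transfer tl hd (sigma a) (tau b) 1 \mPo lq F (nvar E) x)).
  by rewrite /Mq transfer_scale.
have HM0 a b : Mq tl hd sigma tau alpha 0 a b =
  FracField.tofrac (transfer tl hd (sigma a) (tau b) 1).
  by rewrite /Mq expr0.
rewrite /bq /=; case: ifP => _; [|case: ifP => _]; rewrite !HM !HM0; exact: key.
Qed.
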